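(* Let $G\curvearrowright X$ and $H\curvearrowright Y$ be group actions with $\mathrm{Con}(H\curvearrowright Y)\subseteq\mathrm{Con}(G\curvearrowright X)$. Then $\tau(G\curvearrowright X)\le\tau(H\curvearrowright Y)$.
   Context: For an action $G\curvearrowright X$, an ordered tuple $\mathfrak{g}=(g_1,\dots,g_n)$ of elements of $G$ and a finite partition $\mathcal{E}=\{E_1,\dots,E_m\}$ of $X$ (a configuration pair), a configuration is a tuple $C=(C_0,\dots,C_n)\in\{1,\dots,m\}^{n+1}$ such that some $x\in E_{C_0}$ satisfies $g_i\cdot x\in E_{C_i}$ for $i=1,\dots,n$; the set of these is $\mathrm{Con}(\mathfrak{g},\mathcal{E};X)$, and $\mathrm{Con}(G\curvearrowright X)=\{\mathrm{Con}(\mathfrak{g},\mathcal{E};X): (\mathfrak{g},\mathcal{E})\text{ a configuration pair}\}$. A paradoxical decomposition of $G\curvearrowright X$ consists of pairwise disjoint subsets $A_1,\dots,A_n,B_1,\dots,B_m$ of $X$ and elements $g_1,\dots,g_n,h_1,\dots,h_m\in G$ with $X=\bigcup_{i=1}^n g_iA_i=\bigcup_{j=1}^m h_jB_j$. The Tarski number $\tau(G\curvearrowright X)$ is the minimal number of pieces $n+m$ in such a decomposition, and $\infty$ if none exists. *)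

(* Defs.v *)
From mathcomp Require Import all_boot.
From Stdlib Require Import ClassicalEpsilon.

Set Implicit Arguments.
Unset Strict Implicit.
Unset Printing Implicit Defensive.

Definition is_group_action (G X : Type) (mul : G -> G -> G) (one : G)
  (inv : G -> G) (act : G -> X -> X) : Prop :=
  [/\ (forall a b c, mul a (mul b c) = mul (mul a b) c),
      (forall a, mul one a = a /\ mul a one = a),
      (forall a, mul (inv a) a = one /\ mul a (inv a) = one),
      (forall x, act one x = x) &
      (forall a b x, act (mul a b) x = act a (act b x))].

(* A finite partition {E_1,...,E_m} of X is encoded by the labelling
   E : X -> 'I_m (x lies in the piece E x); pieces are nonempty. *)
Definition is_partition (X : Type) (m : nat) (E : X -> 'I_m) : Prop :=
  forall k : 'I_m, exists x, E x = k.

Definition is_configuration (G X : Type) (act : G -> X -> X) (n m : nat)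
  (g : 'I_n -> G) (E : X -> 'I_m) (C : {ffun 'I_n.+1 -> 'I_m}) : Prop :=
  exists x : X, C ord0 = E x /\ forall i : 'I_n, C (lift ord0 i) = E (act (g i) x).

(* Con(H ~> Y) is a subset of Con(G ~> X): every set Con(h,F;Y) (a subset of
   {1..m}^{n+1}) equals some Con(g,E;X). *)
Definition Con_subset (H Y G X : Type) (actH : H -> Y -> Y) (actG : G -> X -> X)
  : Prop :=
  forall (n m : nat) (h : 'I_n -> H) (F : Y -> 'I_m), is_partition F ->
    exists (g : 'I_n -> G) (E : X -> 'I_m), is_partition E /\
      forall C : {ffun 'I_n.+1 -> 'I_m},
        is_configuration actH h F C <-> is_configuration actG g E C.

Definition paradoxical_decomposition (G X : Type) (act : G -> X -> X)
  (n m : nat) (A : 'I_n -> X -> Prop) (B : 'I_m -> X -> Prop)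
  (g : 'I_n -> G) (h : 'I_m -> G) : Prop :=
  [/\ (forall i i' x, A i x -> A i' x -> i = i'),
      (forall j j' x, B j x -> B j' x -> j = j'),
      (forall i j x, A i x -> B j x -> False),
      (forall x, exists i, exists2 a, A i a & act (g i) a = x) &
      (forall x, exists j, exists2 b, B j b & act (h j) b = x)].

Definition has_paradoxical_decomposition_with (G X : Type) (act : G -> X -> X)
  (k : nat) : Prop :=
  exists n m A B g h, n + m = k /\ @paradoxical_decomposition G X act n m A B g h.

Definition decb (P : Prop) : bool :=
  if excluded_middle_informative P then true else false.

(* Tarski number: Some k with k minimal, or None standing for infinity. *)
Definition tarski_number (G X : Type) (act : G -> X -> X) : option nat :=
  match excluded_middle_informative
          (exists k, decb (has_paradoxical_decomposition_with act k)) with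
  | left ex => Some (ex_minn ex)
  | right _ => None
  end.

Definition le_ninf (a b : option nat) : bool :=
  match a, b with
  | _, None => true
  | None, Some _ => false
  | Some x, Some y => x <= y
  end.

(* Main.v *)
Require Import Defs.
From mathcomp Require Import all_boot.
From Stdlib Require Import ClassicalEpsilon.

Lemma compress (Y : Type) (T : finType) (f : Y -> T) :
  exists q (F : Y -> 'I_q) (e : 'I_q -> T), is_partition F /\ forall y, e (F y) = f y.
Proof.
pose S := [set t : T | decb (exists y, f y = t)].
have fS : forall y, f y \in S.
  by move=> y; rewrite inE /decb; case: excluded_middle_informative => // [[]]; exists y.
exists #|S|, (fun y => enum_rank_in (fS y) (f y)), enum_val; split.
- move=> k; have := enum_valP k; rewrite inE /decb.
  case: excluded_middle_informative => // [[y hy]] _; exists y.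
  move: (fS y); rewrite hy => Hy; exact: enum_valK_in.
- by move=> y; apply: (enum_rankK_in (fS y) (fS y)).
Qed.

Lemma transfer
  (G X : Type) (mulG : G -> G -> G) (oneG : G) (invG : G -> G) (actG : G -> X -> X)
  (H Y : Type) (mulH : H -> H -> H) (oneH : H) (invH : H -> H) (actH : H -> Y -> Y) k :
  is_group_action mulG oneG invG actG ->
  is_group_action mulH oneH invH actH ->
  Con_subset actH actG ->
  has_paradoxical_decomposition_with actH k ->
  has_paradoxical_decomposition_with actG k.
Proof.
move=> [aG1 aG2 aG3 aG4 aG5] [aH1 aH2 aH3 aH4 aH5] Hcon.
move=> [n [m [A [B [g [h [<- [dA dB dAB cA cB]]]]]]]].
have lab : forall y, exists l : option ('I_n + 'I_m),
    (forall i, A i y <-> l = Some (inl i)) /\ (forall j, B j y <-> l = Some (inr j)).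
  move=> y.
  case: (classic (exists i, A i y)) => [[i Ai]|nA].
    exists (Some (inl i)); split => [i'|j]; split.
    - by move=> Ai'; rewrite (dA _ _ _ Ai Ai').
    - by case=> <-.
    - by move=> Bj; case: (dAB _ _ _ Ai Bj).
    - by [].
  case: (classic (exists j, B j y)) => [[j Bj]|nB].
    exists (Some (inr j)); split => [i|j']; split.
    - by move=> Ai; case: nA; exists i.
    - by [].
    - by move=> Bj'; rewrite (dB _ _ _ Bj Bj').
    - by case=> <-.
  exists None; split => [i|j]; split => //.
  - by move=> Ai; case: nA; exists i.
  - by move=> Bj; case: nB; exists j.
pose f y := proj1_sig (constructive_indefinite_description _ (lab y)).
have fP y : (forall i, A i y <-> f y = Some (inl i)) /\ (forall j, B j y <-> f y = Some (inr j)).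
  exact: (proj2_sig (constructive_indefinite_description _ (lab y))).
have [q [F [e [pF eF]]]] := @compress Y _ f.
pose h' (l : 'I_(n + m)) := match split l with inl i => invH (g i) | inr j => invH (h j) end.
have [g' [E [pE CE]]] := Hcon _ _ h' F pF.
pose A' i x := e (E x) = Some (inl i).
pose B' j x := e (E x) = Some (inr j).
exists n, m, A', B', (fun i => invG (g' (lshift m i))), (fun j => invG (g' (rshift n j))).
split => //; split.
- by move=> i i' x; rewrite /A' => -> [].
- by move=> j j' x; rewrite /B' => -> [].
- by move=> i j x; rewrite /A' /B' => ->.
- move=> x.
  pose C := [ffun t => if unlift ord0 t is Some l then E (actG (g' l) x) else E x].
  have CX : is_configuration actG g' E C.
    exists x; split; first by rewrite ffunE unlift_none.
    by move=> l; rewrite ffunE liftK.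
  have [y [_ Cy]] := (proj2 (CE C)) CX.
  have [i [a Aa ga]] := cA y.
  have ea : a = actH (h' (lshift m i)) y.
    by rewrite /h' -[lshift m i]/(unsplit (inl i)) unsplitK -ga -aH5 (proj1 (aH3 _)) aH4.
  exists i, (actG (g' (lshift m i)) x).
    rewrite /A'; have := Cy (lshift m i); rewrite ffunE liftK /= -ea => ->; rewrite eF; exact: (proj1 (fP a) i).1 Aa.
  by rewrite -aG5 (proj1 (aG3 _)) aG4.
- move=> x.
  pose C := [ffun t => if unlift ord0 t is Some l then E (actG (g' l) x) else E x].
  have CX : is_configuration actG g' E C.
    exists x; split; first by rewrite ffunE unlift_none.
    by move=> l; rewrite ffunE liftK.
  have [y [_ Cy]] := (proj2 (CE C)) CX.
  have [j [a Ba ga]] := cB y.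
  have ea : a = actH (h' (rshift n j)) y.
    by rewrite /h' -[rshift n j]/(unsplit (inr j)) unsplitK -ga -aH5 (proj1 (aH3 _)) aH4.
  exists j, (actG (g' (rshift n j)) x).
    rewrite /B'; have := Cy (rshift n j); rewrite ffunE liftK /= -ea => ->; rewrite eF; exact: (proj2 (fP a) j).1 Ba.
  by rewrite -aG5 (proj1 (aG3 _)) aG4.
Qed.

Lemma decbP P : decb P -> P.
Proof. by rewrite /decb; case: excluded_middle_informative. Qed.

Lemma decbT (P : Prop) : P -> decb P.
Proof. by rewrite /decb; case: excluded_middle_informative. Qed.

Theorem mainTheorem6
  (G X : Type) (mulG : G -> G -> G) (oneG : G) (invG : G -> G) (actG : G -> X -> X)
  (H Y : Type) (mulH : H -> H -> H) (oneH : H) (invH : H -> H) (actH : H -> Y -> Y) :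
  is_group_action mulG oneG invG actG ->
  is_group_action mulH oneH invH actH ->
  Con_subset actH actG ->
  le_ninf (tarski_number actG) (tarski_number actH).
Proof.
move=> gG gH Hc.
rewrite {2}/tarski_number.
case: excluded_middle_informative => [exH|]; last first.
  by case: (tarski_number actG).
case: (ex_minnP exH) => k0 /decbP Hk0 _.
have Hk0G := @transfer G X mulG oneG invG actG H Y mulH oneH invH actH k0 gG gH Hc Hk0.
rewrite /tarski_number.
case: excluded_middle_informative => [exG|[]]; last by exists k0; apply: decbT.
case: (ex_minnP exG) => k1 _ min1 /=.
by apply: min1; apply: decbT.
Qed.
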